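(* Let $Q,M,B\in\mathbb{R}^{n\times n}$ be symmetric positive semidefinite, and let $\Pi\in\mathbb{R}^{n\times n}$ satisfy $Q-\Pi M^\dagger\Pi^\top\succeq0$ and $\Pi^\top=MM^\dagger\Pi^\top$. Then for all matrices $R,G\in\mathbb{R}^{n\times n}$, $$\operatorname{tr}\{QRR^\top+BMBGG^\top\}\ \ge\ 2\operatorname{tr}\{\Pi BGR^\top\}.$$
   Context: $M^\dagger$ denotes the Moore–Penrose pseudoinverse of $M$. *)

(* Defs.v *)
From mathcomp Require Import all_boot all_order all_algebra.
From mathcomp Require Import reals.
Set Implicit Arguments. Unset Strict Implicit. Unset Printing Implicit Defensive.
Import Order.TTheory GRing.Theory Num.Theory.
Local Open Scope ring_scope.

Definition psd (R : realType) (n : nat) (A : 'M[R]_n) : Prop :=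
  A^T = A /\ forall x : 'cV[R]_n, 0 <= (x^T *m A *m x) 0 0.

(* X is the Moore-Penrose pseudoinverse of M (the four Penrose conditions;
   such X exists and is unique). *)
Definition is_pinv (R : realType) (m n : nat) (M : 'M[R]_(m, n)) (X : 'M[R]_(n, m)) : Prop :=
  [/\ M *m X *m M = M, X *m M *m X = X,
      (M *m X)^T = M *m X & (X *m M)^T = X *m M].

(* Main.v *)
Require Import Defs.
From mathcomp Require Import all_boot all_order all_algebra.
From mathcomp Require Import reals.
From mathcomp Require Import lra.
Import Order.TTheory GRing.Theory Num.Theory.
Local Open Scope ring_scope.

Lemma col_mulx (R : realType) m n p (j : 'I_p) (A : 'M[R]_(m, n)) (B : 'M[R]_(n, p)) :
  col j (A *m B) = A *m col j B.
Proof. by apply/matrixP => a b; rewrite !mxE; apply: eq_bigr => k _; rewrite !mxE. Qed.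

Lemma tr_quad (R : realType) (n : nat) (A : 'M[R]_n)
  (hA : forall x : 'cV[R]_n, 0 <= (x^T *m A *m x) 0 0) (X : 'M[R]_n) :
  0 <= \tr (X^T *m A *m X).
Proof.
rewrite /mxtrace; apply: sumr_ge0 => i _.
have := hA (col i X).
have -> : (X^T *m A *m X) i i = (col i (row i (X^T *m A *m X))) 0 0 by rewrite !mxE.
by rewrite row_mul col_mulx row_mul tr_col.
Qed.

Arguments tr_quad {R n A}.

Theorem lemma2 (R : realType) (n : nat) (Q M B Pi Mdag : 'M[R]_n)
  (hMdag : is_pinv M Mdag)
  (hQ : psd Q) (hM : psd M) (hB : psd B)
  (hPi : psd (Q - Pi *m Mdag *m Pi^T))
  (hrange : Pi^T = M *m Mdag *m Pi^T) :
  forall G Rm : 'M[R]_n,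
    \tr (Q *m Rm *m Rm^T + B *m M *m B *m G *m G^T)
      >= 2%:R * \tr (Pi *m B *m G *m Rm^T).
Proof.
move=> G Rm.
case: hB => hBt _; case: hM => hMt hMq; case: hPi => _ hPq.
set P := Mdag.
set Z := Pi^T *m Rm.
set Y := B *m G.
have eZ : M *m P *m Z = Z by rewrite /Z mulmxA -hrange.
have h1 := tr_quad hPq Rm.
have h2 := tr_quad hMq (P *m Z - Y).
have eQ : \tr (Q *m Rm *m Rm^T) = \tr (Rm^T *m Q *m Rm).
  by rewrite mxtrace_mulC mulmxA.
have eB : \tr (B *m M *m B *m G *m G^T) = \tr (Y^T *m M *m Y).
  by rewrite mxtrace_mulC /Y trmx_mul hBt !mulmxA.
have eX : \tr (Pi *m B *m G *m Rm^T) = \tr (Z^T *m Y).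
  by rewrite mxtrace_mulC /Z /Y trmx_mul trmxK !mulmxA.
have e1 : \tr (Rm^T *m (Q - Pi *m P *m Pi^T) *m Rm)
   = \tr (Rm^T *m Q *m Rm) - \tr (Z^T *m P *m Z).
  by rewrite mulmxBr mulmxBl raddfB /Z trmx_mul trmxK !mulmxA.
have e2 : \tr ((P *m Z - Y)^T *m M *m (P *m Z - Y))
   = \tr (Z^T *m P *m Z) - 2%:R * \tr (Z^T *m Y) + \tr (Y^T *m M *m Y).
  have a1 : \tr ((P *m Z)^T *m M *m (P *m Z)) = \tr (Z^T *m P *m Z).
    rewrite -mulmxA (mulmxA M) eZ -mxtrace_tr !trmx_mul !trmxK mulmxA.
    done.
  have a2 : \tr (Y^T *m M *m (P *m Z)) = \tr (Z^T *m Y).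
    by rewrite -mulmxA (mulmxA M) eZ -mxtrace_tr trmx_mul trmxK.
  have a3 : \tr ((P *m Z)^T *m M *m Y) = \tr (Z^T *m Y).
    by rewrite -a2 -mxtrace_tr !trmx_mul !trmxK hMt !mulmxA.
  rewrite (raddfB (@trmx _ _ _)) /= mulmxBl mulmxBr !mulmxBl !raddfB /= a1 a2 a3 mulr2n mulrDl mul1r.
  by rewrite opprD !addrA opprK; congr (_ + _); rewrite addrAC.
rewrite mxtraceD eQ eB eX.
rewrite e1 in h1; rewrite e2 in h2.
lra.
Qed.
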